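(* In $D_n$ the following hold. (1) For all $1\le p<q\le n-1$: $w_q\cdot w_p=w_p\cdot w_q$. (2) For $1\le p<q\le n$ with $p\le n-1$ and $1\le i_q\le q-1$: $$t_{q}^{i_{q}} \cdot w_{p}=\begin{cases} w_{i_{q}} \cdot t_{q}^{i_{q}} & q= p + i_{q}, \\ w_{i_{q}} \cdot w_{p+i_{q}} \cdot t_{q}^{i_{q}} & q > p + i_{q}, \\ w_{p+i_{q}-q} \cdot w_{i_{q}} \cdot t_{q}^{i_{q}} & q < p + i_{q}. \end{cases}$$ (3) For $2\le p<q\le n-1$ and $1\le i_p\le p-1$: $w_q\cdot t_p^{i_p}=w_{i_p}\cdot t_p^{i_p}\cdot w_q$.
   Context: $D_n$ ($n\ge 2$) is the Coxeter group with generators $s_{1'},s_1,\dots,s_{n-1}$ and relations $s^2=1$, $(s_i s_{i+1})^3=1$, $(s_is_j)^2=1$ for $|i-j|\ge 2$, $(s_{1'}s_2)^3=1$, $(s_{1'}s_i)^2=1$ for $i\ne 2$. For $2\le k\le n$, $t_k=s_1s_2\cdots s_{k-1}$; for $1\le k\le n-1$, $w_k=s_k s_{k-1}\cdots s_2 s_1 s_{1'} s_2\cdots s_k$. *)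

(* Defs.v *)
From mathcomp Require Import all_boot.
Set Implicit Arguments. Unset Strict Implicit. Unset Printing Implicit Defensive.

(* Generators are encoded as naturals:
   0 stands for s_{1'} and i (1 <= i <= n-1) stands for s_i.  Elements of D_n
   are words (seq nat) modulo the congruence generated by the defining
   relations; since every generator is an involution, this monoid quotient is
   exactly the group given by the presentation. *)

Definition Dgen (n g : nat) : bool := g <= n.-1.

Inductive Dn_relator (n : nat) : seq nat -> Prop :=
| DR_inv g : Dgen n g -> Dn_relator n [:: g; g]
| DR_braid i : 1 <= i -> i.+1 <= n.-1 ->
    Dn_relator n [:: i; i.+1; i; i.+1; i; i.+1]
| DR_comm i j : 1 <= i <= n.-1 -> 1 <= j <= n.-1 -> i.+2 <= j ->
    Dn_relator n [:: i; j; i; j]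
| DR_braid' : 2 <= n.-1 -> Dn_relator n [:: 0; 2; 0; 2; 0; 2]
| DR_comm' i : 1 <= i <= n.-1 -> i != 2 -> Dn_relator n [:: 0; i; 0; i].

Inductive Dn_eq (n : nat) : seq nat -> seq nat -> Prop :=
| De_ax r : Dn_relator n r -> Dn_eq n r [::]
| De_refl u : Dn_eq n u u
| De_sym u v : Dn_eq n u v -> Dn_eq n v u
| De_trans u v w : Dn_eq n u v -> Dn_eq n v w -> Dn_eq n u w
| De_ctx a b u v : Dn_eq n u v -> Dn_eq n (a ++ u ++ b) (a ++ v ++ b).

Definition t_word (k : nat) : seq nat := iota 1 k.-1.
(* w_k = s_k s_{k-1} ... s_1 s_{1'} s_2 ... s_k *)
Definition w_word (k : nat) : seq nat := rev (iota 1 k) ++ 0 :: iota 2 k.-1.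
Definition wpow (x : seq nat) (m : nat) : seq nat := flatten (nseq m x).

(* Main.v *)
Require Import Defs.
From mathcomp Require Import all_boot zify.
From Stdlib Require Import Setoid Morphisms.
Set Implicit Arguments. Unset Strict Implicit.


#[export] Instance De_Equiv n : Equivalence (Dn_eq n).
Proof. split; [exact: De_refl | exact: De_sym | move=> x y z; exact: De_trans]. Qed.

#[export] Instance De_cat n : Proper (Dn_eq n ==> Dn_eq n ==> Dn_eq n) (@cat nat).
Proof.
move=> u u' Hu v v' Hv.
apply: (De_trans (v := u' ++ v)); first exact: (De_ctx [::] v Hu).
have := De_ctx u' [::] Hv; by rewrite !cats0.
Qed.

#[export] Instance De_cons n : Proper (eq ==> Dn_eq n ==> Dn_eq n) (@cons nat).
Proof. move=> a _ <- u v H. exact: (De_cat (De_refl n [:: a]) H). Qed.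

Lemma ax n x r : Dn_relator n x -> Dn_eq n (x ++ r) r.
Proof. move=> H; exact: (De_ctx [::] r (De_ax H)). Qed.

Lemma inv2 n g r : g <= n.-1 -> Dn_eq n (g :: g :: r) r.
Proof. move=> H; exact: (ax r (DR_inv H)). Qed.

Definition cm n a b := [|| a == b,
  [&& 0 < a, a <= n.-1, 0 < b, b <= n.-1 & (a.+2 <= b) || (b.+2 <= a)],
  [&& a == 0, 0 < b, b <= n.-1 & b != 2] | [&& b == 0, 0 < a, a <= n.-1 & a != 2]].

Lemma swap_of n a b r : a <= n.-1 -> b <= n.-1 -> Dn_relator n [:: a; b; a; b] ->
  Dn_eq n (b :: a :: r) (a :: b :: r).
Proof.
move=> Ha Hb H.
transitivity (b :: a :: ([:: a; b; a; b] ++ r)); first by rewrite ax //; reflexivity.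
rewrite /= inv2 // inv2 //; reflexivity.
Qed.

Lemma swap n a b r : cm n a b -> Dn_eq n (a :: b :: r) (b :: a :: r).
Proof.
rewrite /cm; case/or4P.
- by move/eqP=> ->; reflexivity.
- case/and5P=> a0 an b0 bn /orP[ab|ba].
  + symmetry; apply: swap_of => //; apply: DR_comm => //; lia.
  + apply: swap_of => //; apply: DR_comm => //; lia.
- case/and4P=> /eqP-> b0 bn b2.
  symmetry; apply: swap_of => //; apply: DR_comm' => //; lia.
- case/and4P=> /eqP-> a0 an a2.
  apply: swap_of => //; apply: DR_comm' => //; lia.
Qed.

Lemma braid_of n a b r : a <= n.-1 -> b <= n.-1 -> Dn_relator n [:: a; b; a; b; a; b] ->
  Dn_eq n (a :: b :: a :: r) (b :: a :: b :: r).
Proof.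
move=> Ha Hb H.
transitivity ([:: a; b; a; b; a; b] ++ (b :: a :: b :: r)); last by rewrite ax //; reflexivity.
rewrite /= (inv2 (g:=b)) // inv2 // inv2 //; reflexivity.
Qed.

Lemma braid n i r : 1 <= i -> i.+1 <= n.-1 ->
  Dn_eq n (i :: i.+1 :: i :: r) (i.+1 :: i :: i.+1 :: r).
Proof. move=> H1 H2; apply: braid_of; try lia; exact: DR_braid. Qed.

Lemma braid' n i r : 1 <= i -> i.+1 <= n.-1 ->
  Dn_eq n (i.+1 :: i :: i.+1 :: r) (i :: i.+1 :: i :: r).
Proof. move=> H1 H2; symmetry; exact: braid. Qed.

Lemma braid0 n r : 2 <= n.-1 -> Dn_eq n (0 :: 2 :: 0 :: r) (2 :: 0 :: 2 :: r).
Proof. move=> H; apply: braid_of; try lia; exact: DR_braid'. Qed.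

Lemma commw n a u r : all (cm n a) u -> Dn_eq n (a :: u ++ r) (u ++ a :: r).
Proof.
elim: u => [|x u IH] /=; first by reflexivity.
case/andP=> H1 H2; rewrite swap // IH //; reflexivity.
Qed.

Lemma commww n v u r : all (fun a => all (cm n a) u) v -> Dn_eq n (v ++ u ++ r) (u ++ v ++ r).
Proof.
elim: v => [|a v IH] /=; first by reflexivity.
case/andP=> H1 H2; rewrite IH // commw //; reflexivity.
Qed.

Lemma cancel_rev n u r : all (fun g => g <= n.-1) u -> Dn_eq n (u ++ rev u ++ r) r.
Proof.
elim: u r => [|a u IH] r /=; first by reflexivity.
case/andP=> H1 H2; rewrite rev_cons cat_rcons IH // inv2 //; reflexivity.
Qed.

Lemma w_word_S k : 1 <= k -> w_word k.+1 = k.+1 :: w_word k ++ [:: k.+1].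
Proof.
case: k => [//|k] _.
rewrite /w_word -(addn1 k.+1) iotaD rev_cat /= -catA /=.
by rewrite iotaD /= add1n addn1 add2n.
Qed.

Lemma WS k r : 1 <= k -> w_word k.+1 ++ r = k.+1 :: w_word k ++ k.+1 :: r.
Proof. by move=> H; rewrite w_word_S // /= -catA. Qed.

Lemma W1 : w_word 1 = [:: 1; 0].
Proof. by []. Qed.

Lemma w_word_le k : all (fun g => g <= k) (w_word k).
Proof.
apply/allP => g; rewrite /w_word mem_cat mem_rev in_cons !mem_iota; lia.
Qed.

Lemma W_hi n k j r : 1 <= k -> j <= n.-1 -> k.+2 <= j ->
  Dn_eq n (j :: w_word k ++ r) (w_word k ++ j :: r).
Proof.
move=> H0 H1 H2; apply: commw; apply: sub_all (w_word_le k) => g Hg.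
rewrite /cm; lia.
Qed.

Lemma W_inv n k r : 1 <= k -> k <= n.-1 -> Dn_eq n (w_word k ++ w_word k ++ r) r.
Proof.
elim: k r => [//|k IH] r _ Hk.
case: (posnP k) => [->|k0].
  rewrite W1 /= swap; last by rewrite /cm; lia.
  rewrite inv2 ?inv2; try lia; reflexivity.
rewrite !WS // (inv2 (g := k.+1)) // IH; try lia. rewrite inv2 //; reflexivity.
Qed.

Lemma braid0' n r : 2 <= n.-1 -> Dn_eq n (2 :: 0 :: 2 :: r) (0 :: 2 :: 0 :: r).
Proof. move=> H; symmetry; exact: braid0. Qed.

Lemma WW_adj n k r : 1 <= k -> k.+1 <= n.-1 ->
  Dn_eq n (w_word k.+1 ++ w_word k ++ r) (w_word k ++ w_word k.+1 ++ r).
Proof.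
elim: k r => [//|k IH] r _ Hk.
case: (posnP k) => [->|k0].
  rewrite /w_word /=.
  symmetry.
  rewrite (swap (a:=1) (b:=0)); last by rewrite /cm; lia.
  rewrite (braid (i:=1)) //; try lia.
  rewrite (braid0' (n:=n)); try lia.
  rewrite (swap (a:=1) (b:=0)); last by rewrite /cm; lia.
  rewrite (braid0 (n:=n)); try lia.
  rewrite (braid' (i:=1)); try lia.
  rewrite (swap (a:=0) (b:=1)); last by rewrite /cm; lia.
  reflexivity.
transitivity (k.+1 :: k.+2 :: w_word k.+1 ++ w_word k ++ k.+2 :: k.+1 :: r).
  rewrite !WS //; try lia.
  set R := (X in Dn_eq _ _ X).
  rewrite (braid (i:=k.+1)); try lia.
  rewrite (W_hi (j:=k.+2) (k:=k)); try lia.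
  rewrite -(W_hi (j:=k.+2) (k:=k)); try lia.
  rewrite (braid' (i:=k.+1)); try lia.
  rewrite -(WS (k:=k)) //.
  rewrite /R -(WS (k:=k)) //; reflexivity.
rewrite IH; try lia.
symmetry.
set R := (X in Dn_eq _ _ X).
rewrite !WS //; try lia.
rewrite (braid (i:=k.+1)); try lia.
rewrite (W_hi (j:=k.+2) (k:=k)); try lia.
rewrite -(W_hi (j:=k.+2) (k:=k)); try lia.
rewrite (braid' (i:=k.+1)); try lia.
rewrite -(WS (k:=k)) //.
reflexivity.
Qed.

Lemma WW_comm n p q r : 1 <= p -> p < q -> q <= n.-1 ->
  Dn_eq n (w_word q ++ w_word p ++ r) (w_word p ++ w_word q ++ r).
Proof.
move=> p1 pq qn; elim: q pq qn r => [//|q IH] pq qn r.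
case: (ltngtP p q) => [lt|gt|eq]; last first.
- by subst; apply: WW_adj.
- lia.
rewrite WS; try lia.
rewrite (W_hi (k:=p)); try lia.
rewrite IH //; try lia.
rewrite (W_hi (k:=p) (j:=q.+1)); try lia.
rewrite -WS; try lia.
reflexivity.
Qed.

Lemma W1aW1 n a r : 1 <= a -> a <= n.-1 ->
  Dn_eq n (w_word 1 ++ w_word a ++ w_word 1 ++ r) (w_word a ++ r).
Proof.
move=> a1 an.
case: (ltngtP 1 a) => [lt|?|<-].
- rewrite -(WW_comm (p:=1) (q:=a)) //; try lia.
  rewrite W_inv //; try lia; reflexivity.
- lia.
- rewrite W_inv; try lia; reflexivity.
Qed.

Lemma iota_split j x : iota j x.+2 = j :: j.+1 :: iota j.+2 x.
Proof. by []. Qed.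

Lemma Tshift n m j r : 1 <= j -> j.+2 <= m -> m <= n ->
  Dn_eq n (t_word m ++ j :: r) (j.+1 :: t_word m ++ r).
Proof.
move=> j1 jm mn.
have E : t_word m = iota 1 j.-1 ++ j :: j.+1 :: iota j.+2 (m - j.+2).
  rewrite /t_word (_ : m.-1 = j.-1 + (m - j.+2).+2); last lia.
  rewrite iotaD iota_split; congr (_ ++ _ :: _ :: iota _ _); lia.
rewrite E -!catA /=.
rewrite -(commw (a:=j) (u:=iota j.+2 (m - j.+2))); last first.
  apply/allP=> g; rewrite mem_iota /cm; lia.
rewrite braid; try lia.
rewrite -(commw (a:=j.+1) (u:=iota 1 j.-1)); last first.
  apply/allP=> g; rewrite mem_iota /cm; lia.
reflexivity.
Qed.

Lemma T2 n m r : 2 <= m -> m <= n ->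
  Dn_eq n (t_word m ++ w_word m.-1 ++ r) (w_word 1 ++ t_word m ++ r).
Proof.
move=> m2 mn.
rewrite /t_word /w_word -catA cancel_rev; last first.
  apply/allP=> g; rewrite mem_iota; lia.
case: m m2 mn => [|[|m]] // _ mn /=.
rewrite (swap (a:=1) (b:=0)); last by rewrite /cm; lia.
rewrite inv2; try lia; reflexivity.
Qed.

Lemma T1 n m k r : 1 <= k -> k.+2 <= m -> m <= n ->
  Dn_eq n (t_word m ++ w_word k ++ r) (w_word 1 ++ w_word k.+1 ++ t_word m ++ r).
Proof.
elim: k r => [//|k IH] r _ km mn.
case: (posnP k) => [->|k0].
  have E : t_word m = 1 :: 2 :: iota 3 (m - 3).
    rewrite /t_word (_ : m.-1 = (m-3).+2) //; lia.
  rewrite E /= ?W1.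
  rewrite -(commw (a:=1) (u:=iota 3 (m-3))); last first.
    apply/allP=> g; rewrite mem_iota /cm; lia.
  rewrite -(commw (a:=0) (u:=iota 3 (m-3))); last first.
    apply/allP=> g; rewrite mem_iota /cm; lia.
  rewrite /w_word /=.
  set L := (X in Dn_eq _ X _).
  rewrite (braid' (i:=1)); try lia.
  rewrite (swap (a:=0) (b:=1)); last by rewrite /cm; lia.
  rewrite (inv2 (g:=1)); try lia.
  rewrite braid0; try lia.
  rewrite (inv2 (g:=2)); try lia.
  rewrite (swap (a:=0) (b:=1)); last by rewrite /cm; lia.
  reflexivity.
set R := (X in Dn_eq _ _ X).
rewrite WS //.
rewrite Tshift; try lia.
rewrite IH; try lia.
rewrite Tshift; try lia.
rewrite (commw (a:=k.+2) (u:=w_word 1)); last first.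
  apply/allP=> g; rewrite W1 !inE /cm; lia.
rewrite -(WS (k:=k.+1)) //.
reflexivity.
Qed.

Lemma tS m r : 1 <= m -> t_word m.+1 ++ r = t_word m ++ m :: r.
Proof.
case: m => [//|m] _; change (iota 1 m.+1 ++ r = iota 1 m ++ m.+1 :: r).
have -> : iota 1 m.+1 = iota 1 m ++ [:: 1 + m] by rewrite -[m.+1]addn1 iotaD.
by rewrite -catA add1n.
Qed.

Lemma Tp n p q r : 2 <= p -> p <= q -> q <= n.-1 ->
  Dn_eq n (t_word p ++ w_word q ++ r) (w_word 1 ++ w_word q ++ t_word p ++ r).
Proof.
move=> p2 pq qn; elim: q pq qn r => [|q IH] pq qn r; first lia.
case: (ltngtP p q.+1) => [lt|gt|eq]; first last.
- subst p.
  rewrite WS; try lia.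
  rewrite -tS; try lia.
  rewrite T1; try lia.
  rewrite tS; try lia.
  rewrite inv2; try lia.
  reflexivity.
- lia.
have cmT : all (cm n q.+1) (t_word p).
  apply/allP=> g; rewrite /t_word mem_iota /cm; lia.
rewrite WS; try lia.
rewrite -(commw (a:=q.+1) (u:=t_word p)); last exact: cmT.
rewrite IH; try lia.
rewrite -(commw (a:=q.+1) (u:=t_word p) r); last exact: cmT.
rewrite (commw (a:=q.+1) (u:=w_word 1)); last first.
  apply/allP=> g; rewrite W1 !inE /cm; lia.
rewrite -(WS (k:=q)); try lia.
reflexivity.
Qed.

Lemma wpowS x i r : wpow x i.+1 ++ r = x ++ wpow x i ++ r.
Proof. by rewrite /wpow /= catA. Qed.

Lemma wpow1 x r : wpow x 1 ++ r = x ++ r.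
Proof. by rewrite /wpow /= cats0. Qed.

Lemma P3 n p q i r : 2 <= p -> p < q -> q <= n.-1 -> 1 <= i -> i <= p.-1 ->
  Dn_eq n (wpow (t_word p) i ++ w_word q ++ r)
          (w_word i ++ w_word q ++ wpow (t_word p) i ++ r).
Proof.
move=> p2 pq qn; elim: i r => [//|i IH] r _ ip.
case: (posnP i) => [->|i0].
  rewrite !wpow1 Tp; try lia; reflexivity.
rewrite !wpowS IH; try lia.
rewrite T1; try lia.
rewrite Tp; try lia.
rewrite W1aW1; try lia.
reflexivity.
Qed.

Definition Xw p q i :=
  if q == p + i then w_word i
  else if p + i < q then w_word i ++ w_word (p + i)
  else w_word (p + i - q) ++ w_word i.

Lemma stepX n p q i y : 1 <= p -> p < q -> q <= n -> 1 <= i -> i.+1 <= q.-1 ->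
  Dn_eq n (t_word q ++ Xw p q i ++ y) (Xw p q i.+1 ++ t_word q ++ y).
Proof.
move=> p1 pq qn i1 iq.
rewrite /Xw.
case: ifP => [/eqP E|E1].
  rewrite ifN; last lia.
  rewrite ifN; last lia.
  rewrite (_ : p + i.+1 - q = 1); last lia.
  rewrite T1; try lia. rewrite catA; reflexivity.
case: ifP => [L|L1].
  rewrite -catA T1; try lia.
  case: (ltngtP (p + i).+1 q) => [L2|L2|L2].
  - rewrite ifN; last lia. rewrite ifT; last lia.
    rewrite T1; try lia. rewrite W1aW1; try lia. rewrite addnS -catA; reflexivity.
  - lia.
  - rewrite ifT; last lia.
    rewrite (_ : p + i = q.-1); last lia.
    rewrite T2; try lia. rewrite W1aW1; try lia. reflexivity.
rewrite ifN; last lia. rewrite ifN; last lia.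
rewrite -catA T1; try lia.
rewrite T1; try lia.
rewrite W1aW1; try lia.
rewrite (_ : p + i.+1 - q = (p + i - q).+1); last lia.
rewrite -catA; reflexivity.
Qed.

Lemma P2 n p q i r : 1 <= p -> p < q -> q <= n -> 1 <= i -> i <= q.-1 ->
  Dn_eq n (wpow (t_word q) i ++ w_word p ++ r) (Xw p q i ++ wpow (t_word q) i ++ r).
Proof.
move=> p1 pq qn; elim: i r => [//|i IH] r _ iq.
case: (posnP i) => [->|i0].
  rewrite !wpow1 /Xw.
  case: (ltngtP (p + 1) q) => [L|L|L].
  - rewrite T1; try lia. rewrite addn1 -catA; reflexivity.
  - lia.
  - rewrite (_ : p = q.-1); last lia.
    rewrite T2; try lia. reflexivity.
rewrite !wpowS IH; try lia.
rewrite stepX; try lia.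
reflexivity.
Qed.

Unset Implicit Arguments.
Theorem mainTheorem5 (n : nat) (hn : 2 <= n) :
  (forall p q, 1 <= p -> p < q -> q <= n.-1 ->
     Dn_eq n (w_word q ++ w_word p) (w_word p ++ w_word q)) /\
  (forall p q i, 1 <= p -> p < q -> q <= n -> p <= n.-1 -> 1 <= i <= q.-1 ->
     Dn_eq n (wpow (t_word q) i ++ w_word p)
       (if q == p + i then w_word i ++ wpow (t_word q) i
        else if p + i < q then w_word i ++ w_word (p + i) ++ wpow (t_word q) i
        else w_word (p + i - q) ++ w_word i ++ wpow (t_word q) i)) /\
  (forall p q i, 2 <= p -> p < q -> q <= n.-1 -> 1 <= i <= p.-1 ->
     Dn_eq n (w_word q ++ wpow (t_word p) i)
       (w_word i ++ wpow (t_word p) i ++ w_word q)).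
Proof.
split; [|split].
- move=> p q p1 pq qn.
  have := @WW_comm n p q [::] p1 pq qn; rewrite !cats0; done.
- move=> p q i p1 pq qn pn /andP[i1 iq].
  have := @P2 n p q i [::] p1 pq qn i1 iq; rewrite !cats0 /Xw.
  by case: ifP => _; [|case: ifP => _]; rewrite -?catA.
- move=> p q i p2 pq qn /andP[i1 ip].
  have H := @P3 n p q i [::] p2 pq qn i1 ip; rewrite !cats0 in H.
  rewrite H W_inv; try lia; reflexivity.
Qed.
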